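(* Let $G$ be a graph. Then for every induced subgraph $H$ of $G$, \[\chi(G) \leq \frac{1}{2} \left(\omega(G) + \frac{\Delta(G) + 1 + |G|}{2} \right) + \frac{3\chi(H) - |H|}{4}.\]
   Context: All graphs are finite and simple with non-empty vertex set; induced subgraphs are likewise taken with non-empty vertex set. $|G|$ denotes the number of vertices of $G$, $\chi(G)$ the chromatic number, $\omega(G)$ the clique number and $\Delta(G)$ the maximum degree. *)

(* Defs.v *)
From mathcomp Require Import all_boot all_order all_algebra.
Set Implicit Arguments. Unset Strict Implicit. Unset Printing Implicit Defensive.

(* A finite simple graph: vertex type T : finType, adjacency e : rel T,
   assumed symmetric and irreflexive (hypotheses of the theorem).
   An induced subgraph is given by a nonempty vertex set S : {set T}. *)

Definition colorable (T : finType) (e : rel T) (S : {set T}) (k : nat) : bool :=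
  [exists f : {ffun T -> 'I_k},
     [forall x in S, forall y in S, e x y ==> (f x != f y)]].

(* Chromatic number of the subgraph induced on S: least k with a proper
   k-colouring (#|T| colours always suffice, so the bound #|T| is harmless). *)
Definition chi (T : finType) (e : rel T) (S : {set T}) : nat :=
  \big[minn/#|T|]_(k < #|T|.+1 | colorable e S k) k.

Definition is_clique (T : finType) (e : rel T) (A : {set T}) : bool :=
  [forall x in A, forall y in A, (x != y) ==> e x y].

Definition omega (T : finType) (e : rel T) : nat :=
  \max_(A : {set T} | is_clique e A) #|A|.

Definition Delta (T : finType) (e : rel T) : nat :=
  \max_(x : T) #|[set y | e x y]|.

(* Main.v *)
Require Import Defs.
From mathcomp Require Import all_boot all_order all_algebra.
From mathcomp Require Import zify.
From Stdlib Require Import Classical.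

Set Implicit Arguments. Unset Strict Implicit. Unset Printing Implicit Defensive.

Section Orb.
Variables (T : finType) (p q : T -> T).
Hypotheses (hp : involutive p) (hq : involutive q).
Variable u : T.
Hypotheses (pu : p u = u) (qu : q u != u).

Fixpoint w i := if i is i'.+1 then (if odd i' then p else q) (w i') else u.

Lemma w_back i : (if odd i then p else q) (w i.+1) = w i.
Proof. by rewrite /=; case: (odd i). Qed.

Lemma w_inj b : (forall i, i < b -> w i.+1 != w i) -> forall a, a < b -> w a != w b.
Proof.
elim: b => [//|b IH] H a ab; apply/eqP => hab.
have Hb i : i < b -> w i.+1 != w i by move=> ib; apply: H; lia.
have wb : w b = (if odd b then p else q) (w a) by rewrite hab w_back.
case: a ab hab wb => [|a'] ab hab wb.
  rewrite /= in wb; case ob: (odd b) wb => wb.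
    by move: (H b (ltnSn b)); rewrite -hab wb pu eqxx.
  case: b ob IH H Hb ab hab wb => [|b] ob IH H Hb ab hab wb.
    by move: (H 0 isT); rewrite -hab eqxx.
  case: b ob IH H Hb ab hab wb => [//|b] ob IH H Hb ab hab wb.
  by have := IH Hb 1 isT; rewrite wb /= eqxx.
case oa: (odd a' == odd b).
  have : w a' = w b by rewrite -(w_back a') (eqP oa) hab w_back.
  by move/eqP; rewrite (negbTE (IH Hb a' _)) //; lia.
have oab : odd a'.+1 = odd b by move: oa; rewrite /=; case: (odd a'); case: (odd b).
have wa : w a'.+2 = w b by rewrite wb -oab.
case: (ltngtP a'.+1 b) => h.
- case: (ltngtP a'.+2 b) => h2.
  + by move/eqP: wa; rewrite (negbTE (IH Hb _ h2)).
  + lia.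
  + by move: oab; rewrite -h2 /=; case: (odd a').
- lia.
- by move: (H b (ltnSn b)); rewrite -hab h eqxx.
Qed.

Lemma refl_ex : exists j, w j.+1 == w j.
Proof.
case: (boolP [exists j : 'I_#|T|, w j.+1 == w j]) => [/existsP [j hj]|/existsPn H].
  by exists j.
have H' i : i < #|T| -> w i.+1 != w i by move=> hi; exact: (H (Ordinal hi)).
have inj : injective (fun i : 'I_#|T|.+1 => w i).
  move=> a b hab; apply/val_inj/eqP; case: (ltngtP a b) => // h.
  - have Hb i : i < b -> w i.+1 != w i by move=> hi; apply: H'; have := ltn_ord b; lia.
    by have := w_inj Hb h; rewrite hab eqxx.
  - have Ha i : i < a -> w i.+1 != w i by move=> hi; apply: H'; have := ltn_ord a; lia.
    by have := w_inj Ha h; rewrite hab eqxx.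
by have := leq_card _ inj; rewrite card_ord ltnn.
Qed.

Definition rr := [rel a b | (b == p a) || (b == q a)].

Lemma orbit_fix : exists z, forall x, connect rr u x -> (p x == x) || (q x == x) -> x = u \/ x = z.
Proof.
pose j := ex_minn refl_ex.
have jr : w j.+1 == w j by rewrite /j; case: ex_minnP.
have jmin i : i < j -> w i.+1 != w i.
  move=> ij; apply/negP => h; have := ij; rewrite /j; case: ex_minnP => m _ /(_ i h); lia.
pose S x := [exists i : 'I_j.+1, x == w i].
have Sw i : i <= j -> S (w i) by move=> ij; apply/existsP; exists (Ordinal (ij : i < j.+1)).
have clos a : S a -> S (p a) && S (q a).
  case/existsP => [[i /= ij] /eqP ->].
  have h1 : S ((if odd i then p else q) (w i)).
    rewrite -/(w i.+1); case: (ltngtP i j) => h; [exact: Sw | lia |].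
    by rewrite h (eqP jr); exact: Sw.
  have h2 : S ((if odd i then q else p) (w i)).
    case: i ij h1 => [|i] ij h1; first by rewrite /= pu; exact: (Sw 0 (leq0n j)).
    have -> : (if odd i.+1 then q else p) (w i.+1) = w i by rewrite -(w_back i) /=; case: (odd i).
    apply: Sw; lia.
  by case: (odd i) h1 h2 => /= -> ->.
have Sc x : connect rr u x -> S x.
  case/connectP => s ps ->; have : S u by exact: (Sw 0 isT).
  elim: s u ps => [//|b s IHs] a /= /andP [/orP [/eqP ->|/eqP ->] ps] Sa; apply: IHs => //;
    by case/andP: (clos a Sa).
exists (w j) => x /Sc /existsP [[i /= ij] /eqP ->] fx.
case: i ij fx => [|i] ij fx; first by left.
case: (ltngtP i.+1 j) => h; [|lia|by right; rewrite h].
have n1 : (if odd i.+1 then p else q) (w i.+1) != w i.+1 by exact: jmin h.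
have n2 : (if odd i then p else q) (w i.+1) != w i.+1 by rewrite w_back eq_sym; apply: jmin; lia.
move: fx n1 n2; rewrite /=; case: (odd i) => /= /orP [/eqP ->|/eqP ->]; rewrite ?eqxx //.
Qed.

End Orb.

Section G.
Variables (T : finType) (e : rel T).
Hypotheses (e_sym : symmetric e) (e_irr : irreflexive e).

Lemma bigmin_le_seq (I : eqType) (r : seq I) (P : pred I) (F : I -> nat) d j :
  j \in r -> P j -> \big[minn/d]_(i <- r | P i) F i <= F j.
Proof.
elim: r => [//|a r IH]; rewrite inE big_cons => /orP [/eqP <-|jr] Pj.
  by rewrite Pj geq_minl.
case: (P a); last exact: IH.
by rewrite geq_min IH ?orbT.
Qed.

Lemma chi_colorable (S : {set T}) : colorable e S (chi e S).
Proof.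
rewrite /chi; apply: (big_ind (fun k => colorable e S k)) => //.
- apply/existsP; exists [ffun x => enum_rank x]; apply/forallP => x; apply/implyP => _.
  apply/forallP => y; apply/implyP => _; apply/implyP => exy; rewrite !ffunE.
  apply/negP => /eqP /enum_rank_inj exy'; by rewrite exy' e_irr in exy.
- by move=> a b ca cb; rewrite /minn; case: ifP.
Qed.


Lemma bigmin_le_d (I : Type) (r : seq I) (P : pred I) (F : I -> nat) d :
  \big[minn/d]_(i <- r | P i) F i <= d.
Proof.
elim: r => [|a r IH]; first by rewrite big_nil.
rewrite big_cons; case: (P a) => //; exact: leq_trans (geq_minr _ _) IH.
Qed.

Lemma chi_min (S : {set T}) k : colorable e S k -> chi e S <= k.
Proof.
move=> ck; case: (leqP k #|T|) => hk.
  have hk' : k < #|T|.+1 by [].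
  rewrite /chi.
  exact: (@bigmin_le_seq _ _ (fun i : 'I_#|T|.+1 => colorable e S i) (fun i : 'I_#|T|.+1 => val i) _ (Ordinal hk') (mem_index_enum _) ck).
by apply: leq_trans (ltnW hk); apply: bigmin_le_d.
Qed.

Definition colN (V : {set T}) (k : nat) : Prop :=
  exists f : T -> nat, (forall x, x \in V -> f x < k) /\
     (forall x y, x \in V -> y \in V -> e x y -> f x <> f y).

Definition chi0 (V : {set T}) := if V == set0 then 0 else chi e V.

Lemma chi0_le (V : {set T}) k : colN V k -> chi0 V <= k.
Proof.
case=> f [fk fp]; rewrite /chi0; case: eqP => // /eqP; rewrite -card_gt0 => /card_gt0P [x0 x0V].
have kp : 0 < k by apply: leq_ltn_trans (fk _ x0V).
apply: chi_min; apply/existsP; exists [ffun x => insubd (Ordinal kp) (f x)].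
apply/forallP => x; apply/implyP => xV; apply/forallP => y; apply/implyP => yV; apply/implyP => exy.
rewrite !ffunE; apply/negP => /eqP /(congr1 val); rewrite !val_insubd !fk //.
exact: fp.
Qed.

Lemma chi0_col (V : {set T}) : colN V (chi0 V).
Proof.
rewrite /chi0; case: eqP => [->|_].
  by exists (fun _ => 0); split => x; rewrite inE.
have /existsP [g /forallP gp] := chi_colorable V.
exists (fun x => val (g x)); split => [x _|x y xV yV exy]; first exact: ltn_ord.
move=> /val_inj h; have := gp x; rewrite xV /= => /forallP /(_ y); rewrite yV exy h /=.
by rewrite eqxx.
Qed.

Lemma chi0_sub (V W : {set T}) : V \subset W -> chi0 V <= chi0 W.
Proof.
move=> sVW; apply: chi0_le; have [f [fk fp]] := chi0_col W.
exists f; split => [x xV|x y xV yV]; [apply: fk|apply: fp]; exact: (subsetP sVW).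
Qed.

Definition omV (V : {set T}) := \max_(A : {set T} | (A \subset V) && is_clique e A) #|A|.
Definition DeV (V : {set T}) := \max_(x in V) #|[set y in V | e x y]|.

Lemma clique0 : is_clique e set0.
Proof. by apply/forallP => x; rewrite inE. Qed.

Lemma omV_ge (V A : {set T}) : A \subset V -> is_clique e A -> #|A| <= omV V.
Proof. by move=> sA cA; rewrite /omV; apply: leq_bigmax_cond; rewrite sA. Qed.

Lemma omV_ex (V : {set T}) : exists A : {set T}, [/\ A \subset V, is_clique e A & #|A| = omV V].
Proof.
have P0 : (set0 \subset V) && is_clique e set0 by rewrite sub0set clique0.
rewrite /omV (@bigmax_eq_arg _ set0 _ _ P0).
case: arg_maxnP => // A /andP [sA cA] _; by exists A.
Qed.

Lemma DeV_ge (V : {set T}) x : x \in V -> #|[set y in V | e x y]| <= DeV V.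
Proof. by move=> xV; rewrite /DeV; apply: leq_bigmax_cond. Qed.

Lemma DeV_ex (V : {set T}) : V != set0 -> exists2 x, x \in V & #|[set y in V | e x y]| = DeV V.
Proof.
rewrite -card_gt0 => /card_gt0P [x0 x0V].
rewrite /DeV (@bigmax_eq_arg _ x0 _ _ x0V); case: arg_maxnP => // x xV _; by exists x.
Qed.

Lemma omV_sub (V W : {set T}) : V \subset W -> omV V <= omV W.
Proof. by move=> sVW; have [A [sA cA <-]] := omV_ex V; apply: omV_ge => //; apply: subset_trans sVW. Qed.

Lemma DeV_sub (V W : {set T}) : V \subset W -> DeV V <= DeV W.
Proof.
move=> sVW; case: (V =P set0) => [->|/eqP nV].
  by rewrite /DeV big_pred0 // => x; rewrite inE.
have [x xV <-] := DeV_ex nV; apply: leq_trans (DeV_ge (subsetP sVW _ xV)).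
apply: subset_leq_card; apply/subsetP => y; rewrite !inE => /andP [yV ->]; by rewrite (subsetP sVW).
Qed.


Definition indepb (I : {set T}) := [forall x in I, forall y in I, ~~ e x y].

Lemma indepP I x y : indepb I -> x \in I -> y \in I -> ~~ e x y.
Proof. by move=> /forallP /(_ x) /implyP hI xI yI; have /forallP /(_ y) /implyP := hI xI; apply. Qed.

Lemma chi_rm_indep (V I : {set T}) : indepb I -> chi0 V <= chi0 (V :\: I) + 1.
Proof.
move=> iI; apply: chi0_le; have [f [fk fp]] := chi0_col (V :\: I).
set k := chi0 (V :\: I).
exists (fun x => if x \in I then k else f x); split.
  move=> x xV; case: ifP => xI; first by rewrite addn1.
  by rewrite addn1 ltnS ltnW // fk // inE xI.
move=> x y xV yV exy; case: ifP => xI; case: ifP => yI.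
- by have := indepP iI xI yI; rewrite exy.
- by move=> h; have := fk y; rewrite inE yI yV -h ltnn => /(_ isT).
- by move=> h; have := fk x; rewrite inE xI xV h ltnn => /(_ isT).
- by apply: fp => //; rewrite inE ?xI ?yI.
Qed.

Lemma DeV_rm (V I : {set T}) : I \subset V ->
  (forall x, x \in V :\: I -> exists2 y, y \in I & e x y) -> V :\: I != set0 ->
  (DeV (V :\: I)).+1 <= DeV V.
Proof.
move=> sIV dom ne; have [x xW <-] := DeV_ex ne.
have xV : x \in V by move: xW; rewrite inE => /andP [].
apply: leq_trans (DeV_ge xV); apply: proper_card; apply/properP; split.
  by apply/subsetP => z; rewrite !inE => /andP [/andP [_ ->] ->].
have [y yI exy] := dom x xW; exists y; first by rewrite inE (subsetP sIV) // exy.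
by rewrite !inE yI.
Qed.

Lemma mis_ext (V I : {set T}) : indepb I -> I \subset V ->
  exists J : {set T}, [/\ I \subset J, J \subset V, indepb J &
      forall x, x \in V :\: J -> exists2 y, y \in J & e x y].
Proof.
move=> iI sIV.
have P0 : [&& I \subset I, I \subset V & indepb I] by rewrite subxx sIV iI.
case: (@arg_maxnP _ I (fun J => [&& I \subset J, J \subset V & indepb J]) (fun J => #|J|) P0).
move=> J /and3P [sIJ sJV iJ] Jmax; exists J; split => // x xVJ.
case: (boolP [exists y in J, e x y]) => [/existsP [y /andP [yJ exy]]|nex]; first by exists y.
have xJ : x \notin J by move: xVJ; rewrite inE => /andP [].
have xV : x \in V by move: xVJ; rewrite inE => /andP [].
have : #|x |: J| <= #|J|.
  apply: Jmax; apply/and3P; split.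
  - exact: subset_trans sIJ (subsetUr _ _).
  - by rewrite subUset sub1set xV.
  apply/forallP => a; apply/implyP; rewrite !inE => /orP [/eqP ->|aJ]; apply/forallP => b;
    apply/implyP; rewrite !inE => /orP [/eqP ->|bJ].
  - by rewrite e_irr.
  - by apply/negP => exb; move/negP: nex; apply; apply/existsP; exists b; rewrite bJ exb.
  - by apply/negP => eax; move/negP: nex; apply; apply/existsP; exists a; rewrite aJ e_sym eax.
  - exact: indepP iJ aJ bJ.
by rewrite cardsU1 xJ ltnn.
Qed.

Lemma chi_split (V A : {set T}) : chi0 V <= chi0 (V :&: A) + chi0 (V :\: A).
Proof.
apply: chi0_le; have [f [fk fp]] := chi0_col (V :&: A); have [g [gk gp]] := chi0_col (V :\: A).
set k := chi0 (V :&: A).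
exists (fun x => if x \in A then f x else k + g x); split.
  move=> x xV; case: ifP => xA.
    by apply: leq_trans (fk x _) (leq_addr _ _); rewrite inE xV xA.
  by rewrite ltn_add2l; apply: gk; rewrite inE xA xV.
move=> x y xV yV exy; case: ifP => xA; case: ifP => yA.
- by apply: fp => //; rewrite inE ?xV ?xA ?yV ?yA.
- by move=> h; have := fk x; rewrite inE xV xA h ltnNge leq_addr => /(_ isT).
- by move=> h; have := fk y; rewrite inE yV yA -h ltnNge leq_addr => /(_ isT).
- by move=> /addnI; apply: gp => //; rewrite inE ?xV ?xA ?yV ?yA.
Qed.

Lemma cliqueP (C : {set T}) x y : is_clique e C -> x \in C -> y \in C -> x != y -> e x y.
Proof. by move=> /forallP /(_ x) /implyP h xC yC; have /forallP /(_ y) /implyP := h xC; move/(_ yC)/implyP. Qed.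

Lemma omV_join (V A : {set T}) : A \subset V ->
  (forall x y, x \in A -> y \in V :\: A -> e x y) -> omV A + omV (V :\: A) <= omV V.
Proof.
move=> sAV join; have [CA [sCA cCA <-]] := omV_ex A; have [CB [sCB cCB <-]] := omV_ex (V :\: A).
have disj : CA :&: CB = set0.
  apply/setP => z; rewrite !inE; apply/negP => /andP [/(subsetP sCA) zA /(subsetP sCB)].
  by rewrite inE zA.
have -> : #|CA| + #|CB| = #|CA :|: CB| by rewrite cardsU disj cards0 subn0.
apply: omV_ge.
  by rewrite subUset (subset_trans sCA sAV) (subset_trans sCB) // subsetDl.
apply/forallP => x; apply/implyP; rewrite inE => /orP [xA|xB]; apply/forallP => y; apply/implyP;
  rewrite inE => /orP [yA|yB]; apply/implyP => nxy.
- exact: cliqueP cCA xA yA nxy.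
- exact: join (subsetP sCA _ xA) (subsetP sCB _ yB).
- by rewrite e_sym; exact: join (subsetP sCA _ yA) (subsetP sCB _ xB).
- exact: cliqueP cCB xB yB nxy.
Qed.

Lemma DeV_join (V A : {set T}) : A \subset V -> A != set0 ->
  (forall x y, x \in A -> y \in V :\: A -> e x y) -> DeV A + #|V :\: A| <= DeV V.
Proof.
move=> sAV nA join; have [x xA <-] := DeV_ex nA.
apply: leq_trans (DeV_ge (subsetP sAV _ xA)).
have disj : [set y in A | e x y] :&: (V :\: A) = set0.
  by apply/setP => z; rewrite !inE; case: (z \in A); rewrite ?andbF.
rewrite -[X in X <= _]subn0 -(cards0 T) -disj -cardsU; apply: subset_leq_card.
apply/subsetP => z; rewrite !inE => /orP [/andP [zA ->]|/andP [zA zV]].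
  by rewrite (subsetP sAV).
by rewrite zV join // inE zA.
Qed.

Lemma DeV_bound (V : {set T}) : V != set0 -> (DeV V).+1 <= #|V|.
Proof.
move=> nV; have [x xV <-] := DeV_ex nV; apply: proper_card; apply/properP; split.
  by apply/subsetP => z; rewrite inE => /andP [].
by exists x; rewrite // inE e_irr andbF.
Qed.

Lemma omV_univ (V : {set T}) v : v \in V -> (forall y, y \in V -> y != v -> e v y) ->
  (omV (V :\ v)).+1 <= omV V.
Proof.
move=> vV univ; have [C [sC cC <-]] := omV_ex (V :\ v).
have vC : v \notin C by apply/negP => /(subsetP sC); rewrite !inE eqxx.
have -> : #|C|.+1 = #|v |: C| by rewrite cardsU1 vC.
apply: omV_ge.
  by rewrite subUset sub1set vV (subset_trans sC) // subsetDl.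
apply/forallP => x; apply/implyP; rewrite !inE => /orP [/eqP ->|xC]; apply/forallP => y; apply/implyP;
  rewrite !inE => /orP [/eqP ->|yC]; apply/implyP => nxy.
- by rewrite eqxx in nxy.
- have := subsetP sC _ yC; rewrite !inE => /andP [yv yV]; exact: univ.
- have := subsetP sC _ xC; rewrite !inE => /andP [xv xV]; rewrite e_sym; exact: univ.
- exact: cliqueP cC xC yC nxy.
Qed.


Definition Fr x y := (x != y) && ~~ e x y.

Definition matchb (V : {set T}) (p : {ffun T -> T}) :=
  [&& [forall x, p (p x) == x], [forall x, (x \notin V) ==> (p x == x)] &
      [forall x, (p x != x) ==> Fr x (p x)]].

Definition defect (V : {set T}) (p : {ffun T -> T}) := #|[set x in V | p x == x]|.

Section Match.
Variables (V : {set T}) (p : {ffun T -> T}).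
Hypothesis mp : matchb V p.

Lemma m_inv x : p (p x) = x.
Proof. by case/and3P: mp => /forallP /(_ x) /eqP. Qed.

Lemma m_out x : x \notin V -> p x = x.
Proof. by case/and3P: mp => _ /forallP /(_ x) /implyP h _ /h /eqP. Qed.

Lemma m_edge x : p x != x -> Fr x (p x).
Proof. by case/and3P: mp => _ _ /forallP /(_ x) /implyP. Qed.

Lemma m_V x : x \in V -> p x \in V.
Proof.
move=> xV; apply/negPn/negP => pxV; have := m_out pxV; rewrite m_inv => h.
by move: pxV; rewrite -h xV.
Qed.

Lemma m_inj : injective p.
Proof. exact: (can_inj m_inv). Qed.

Lemma match_reps : exists R : {set T}, [/\ R \subset V, 2 * #|R| = #|V| + defect V p,
   (forall x, x \in V -> x \in R \/ p x \in R) & (forall x, x \in R -> p x \in R -> p x = x)].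
Proof.
pose rk (x : T) := val (enum_rank x).
have rk_inj : injective rk by move=> x y /val_inj /enum_rank_inj.
pose R := [set x in V | ~~ (rk (p x) < rk x)].
pose Fx := [set x in V | p x == x].
pose R' := V :\: R.
have FxR : Fx \subset R.
  by apply/subsetP => x; rewrite !inE => /andP [-> /eqP ->]; rewrite ltnn.
have sRV : R \subset V by apply/subsetP => x; rewrite inE => /andP [].
have c1 : #|R'| <= #|R :\: Fx|.
  rewrite -(card_imset _ m_inj); apply: subset_leq_card; apply/subsetP => y /imsetP [x].
  rewrite !inE; case/andP => h xV ->.
  have h' : rk (p x) < rk x by move: h; rewrite xV /= negbK.
  rewrite m_V //= m_inv -leqNgt (ltnW h') andbT.
  by apply/eqP => hx; rewrite -hx ltnn in h'.
have c2 : #|R :\: Fx| <= #|R'|.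
  rewrite -(card_imset _ m_inj); apply: subset_leq_card; apply/subsetP => y /imsetP [x].
  rewrite !inE; case/andP => nfx /andP [xV h] ->.
  have nfx' : p x != x by move: nfx; rewrite xV.
  rewrite m_V // m_inv /= andbT negbK; rewrite -leqNgt in h.
  rewrite ltn_neqAle h andbT.
  by apply/eqP => /rk_inj hx; rewrite -hx eqxx in nfx'.
have cV : #|V| = #|R| + #|R'| by rewrite -(cardsID R V) (setIidPr sRV).
have cD : #|R :\: Fx| = #|R| - #|Fx| by rewrite cardsD (setIidPr FxR).
have cF : #|Fx| <= #|R| by apply: subset_leq_card.
exists R; split => //.
- rewrite /defect -/Fx; lia.
- move=> x xV; case: (boolP (rk (p x) < rk x)) => h; last by left; rewrite inE xV h.
  by right; rewrite inE m_V //= m_inv -leqNgt ltnW.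
- move=> x; rewrite !inE m_inv => /andP [_ h1] /andP [_ h2].
  by apply: rk_inj; apply/eqP; rewrite eqn_leq -!leqNgt in h1 h2 *; rewrite h1 h2.
Qed.

Lemma match_col : 2 * chi0 V <= #|V| + defect V p.
Proof.
have [R [sRV cR cov uni]] := match_reps.
pose rep (x : T) := if x \in R then x else p x.
have repR x : x \in V -> rep x \in R.
  by move=> xV; rewrite /rep; case: ifP => // /negbT xR; case: (cov x xV) => //; rewrite (negbTE xR).
have repE x y : rep x = rep y -> y = x \/ y = p x.
  rewrite /rep; case: ifP => _; case: ifP => _.
  - by move=> ->; left.
  - by move=> ->; rewrite m_inv; right.
  - by move=> <-; right.
  - by move/m_inj => ->; left.
rewrite -cR leq_mul2l /=.
apply: chi0_le; exists (fun x => index (rep x) (enum R)); split.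
  by move=> x xV; rewrite cardE index_mem mem_enum repR.
move=> x y xV yV exy hidx.
have hr : rep x = rep y.
  have hx : rep x \in enum R by rewrite mem_enum repR.
  by rewrite -(nth_index x hx) hidx nth_index // mem_enum repR.
case: (repE x y hr) => hy; first by rewrite hy e_irr in exy.
have pxx : p x != x by apply/eqP => h; rewrite hy h e_irr in exy.
by move: (m_edge pxx); rewrite /Fr -hy exy andbF.
Qed.

End Match.

Lemma matchb_id V : matchb V [ffun x => x].
Proof.
apply/and3P; split; apply/forallP => x; rewrite ?ffunE ?eqxx ?implybT //.
Qed.

Lemma dmin_ex V : exists n, [exists p, matchb V p && (defect V p == n)].
Proof. by exists (defect V [ffun x => x]); apply/existsP; exists [ffun x => x]; rewrite matchb_id eqxx. Qed.

Definition dmin V := ex_minn (dmin_ex V).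

Lemma dmin_le V p : matchb V p -> dmin V <= defect V p.
Proof.
move=> mp; rewrite /dmin; case: ex_minnP => m _ h; apply: h.
by apply/existsP; exists p; rewrite mp eqxx.
Qed.

Lemma dmin_attained V : exists2 p, matchb V p & defect V p = dmin V.
Proof.
rewrite /dmin; case: ex_minnP => m /existsP [p /andP [mp /eqP dp]] _; by exists p.
Qed.


Lemma Fr_sym x y : Fr x y = Fr y x.
Proof. by rewrite /Fr eq_sym e_sym. Qed.

Lemma augment V p a b : matchb V p -> defect V p = dmin V -> a \in V -> b \in V ->
  Fr a b -> p a = a -> p b = b -> False.
Proof.
move=> mp dp aV bV fab pa pb.
have nab : a != b by case/andP: fab.
pose p' := [ffun x => if x == a then b else if x == b then a else p x].
have pxa x : x != a -> p x != a by move=> xa; apply/eqP => h; have := m_inv mp x; rewrite h pa => hx; rewrite hx eqxx in xa.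
have pxb x : x != b -> p x != b by move=> xb; apply/eqP => h; have := m_inv mp x; rewrite h pb => hx; rewrite hx eqxx in xb.
have nba : b != a by rewrite eq_sym.
have p'a : p' a = b by rewrite ffunE eqxx.
have p'b : p' b = a by rewrite ffunE (negbTE nba) eqxx.
have p'o x : x != a -> x != b -> p' x = p x by move=> xa xb; rewrite ffunE (negbTE xa) (negbTE xb).
have mp' : matchb V p'.
  apply/and3P; split; apply/forallP => x.
  - case: (x =P a) => [->|/eqP xa]; first by rewrite p'a p'b.
    case: (x =P b) => [->|/eqP xb]; first by rewrite p'b p'a.
    by rewrite p'o // p'o ?(m_inv mp) ?pxa ?pxb.
  - apply/implyP => xV; case: (x =P a) => [xa|/eqP xa]; first by rewrite xa aV in xV.
    case: (x =P b) => [xb|/eqP xb]; first by rewrite xb bV in xV.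
    by rewrite p'o // (m_out mp).
  - apply/implyP; case: (x =P a) => [-> _|/eqP xa]; first by rewrite p'a.
    case: (x =P b) => [-> _|/eqP xb]; first by rewrite p'b Fr_sym.
    rewrite p'o //; exact: (m_edge mp).
have : defect V p' < defect V p.
  apply: proper_card; apply/properP; split.
    apply/subsetP => x; rewrite !inE => /andP [xV].
    case: (x =P a) => [->|/eqP xa]; first by rewrite p'a (negbTE nba).
    case: (x =P b) => [->|/eqP xb]; first by rewrite p'b (negbTE nab).
    by rewrite p'o // => ->; rewrite xV.
  exists a; first by rewrite inE aV pa eqxx.
  by rewrite inE p'a (negbTE nba) andbF.
by rewrite dp ltnNge dmin_le.
Qed.

Definition alpha2 (V : {set T}) := forall x y z, x \in V -> y \in V -> z \in V ->
  x != y -> y != z -> x != z -> ~~ e x y -> ~~ e y z -> ~~ e x z -> False.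

Lemma col_match V k : alpha2 V -> colN V k ->
  exists2 p, matchb V p & #|V| + defect V p <= 2 * k.
Proof.
move=> a2 [f [fk fp]].
have samec x y : x \in V -> y \in V -> f x = f y -> ~~ e x y.
  by move=> xV yV fxy; apply/negP => exy; exact: fp x y xV yV exy fxy.
have uniq3 x y z : x \in V -> y \in V -> z \in V -> y != x -> z != x -> f y = f x -> f z = f x -> y = z.
  move=> xV yV zV yx zx fy fz; case: (y =P z) => // /eqP yz; exfalso.
  apply: (a2 x y z xV yV zV).
  - by rewrite eq_sym.
  - exact: yz.
  - by rewrite eq_sym.
  - exact: samec x y xV yV (esym fy).
  - by apply: (samec y z yV zV); rewrite fy fz.
  - exact: samec x z xV zV (esym fz).
pose p := [ffun x => if x \in V then (if [pick y in V | (y != x) && (f y == f x)] is Some y then y else x) else x].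
have pE x : x \in V -> forall y, y \in V -> y != x -> f y = f x -> p x = y.
  move=> xV y yV yx fy; rewrite ffunE xV; case: pickP => [z /andP [zV /andP [zx /eqP fz]]|].
    exact: uniq3 xV zV yV zx yx fz fy.
  by move/(_ y); rewrite yV yx fy eqxx.
have pN x : x \in V -> (forall y, y \in V -> y != x -> f y <> f x) -> p x = x.
  move=> xV h; rewrite ffunE xV; case: pickP => // z /andP [zV /andP [zx /eqP fz]].
  by case: (h z zV zx fz).
have pV x : x \in V -> p x \in V.
  move=> xV; rewrite ffunE xV; case: pickP => // z /andP [zV _]; exact: zV.
have pF x : x \in V -> p x != x -> [/\ p x \in V, p x != x & f (p x) = f x].
  move=> xV; rewrite ffunE xV; case: pickP => [z /andP [zV /andP [zx /eqP fz]] _ //|_].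
  by rewrite eqxx.
have mp : matchb V p.
  apply/and3P; split; apply/forallP => x.
  - case: (boolP (x \in V)) => xV; last by rewrite !ffunE (negbTE xV) ?(negbTE xV).
    case: (boolP (p x == x)) => [/eqP -> //|px].
    have [pxV pxx fpx] := pF x xV px.
    by rewrite (pE (p x) pxV x xV) // eq_sym.
  - by apply/implyP => xV; rewrite ffunE (negbTE xV).
  - apply/implyP => px; case: (boolP (x \in V)) => xV; last by rewrite ffunE (negbTE xV) eqxx in px.
    have [pxV pxx fpx] := pF x xV px.
    by rewrite /Fr eq_sym pxx /=; apply: samec => //.
exists p => //.
have [R [sRV cR cov uni]] := match_reps mp.
rewrite -cR leq_mul2l /=.
have -> : #|R| = size (map f (enum R)) by rewrite size_map cardE.
rewrite -[k](size_iota 0); apply: uniq_leq_size.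
  rewrite map_inj_in_uniq ?enum_uniq // => x y; rewrite !mem_enum => xR yR fxy.
  apply/eqP/negP => nxy.
  have xV := subsetP sRV _ xR; have yV := subsetP sRV _ yR.
  have yx : y != x by rewrite eq_sym; apply/negP.
  have pxy := pE x xV y yV yx (esym fxy).
  have := uni x xR; rewrite pxy => /(_ yR) hy.
  by rewrite hy eqxx in yx.
move=> c /mapP [x xR ->]; rewrite mem_iota add0n /=; apply: fk.
by rewrite mem_enum in xR; exact: subsetP sRV _ xR.
Qed.


Definition Rr (V : {set T}) := [rel x y | [&& x \in V, y \in V & Fr x y]].

Lemma path_V (V : {set T}) a s : a \in V -> path (Rr V) a s -> last a s \in V.
Proof. by elim: s a => [//|b s IH] a aV /= /andP [/and3P [_ bV _] ps]; exact: IH. Qed.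

Lemma gal_ind (V : {set T}) (k : nat) : (forall v, v \in V -> exists2 p, matchb V p & (defect V p = dmin V) /\ p v = v) ->
  forall p u v s, matchb V p -> defect V p = dmin V -> u \in V -> p u = u -> p v = v -> u != v ->
  path (Rr V) u s -> last u s = v -> size s <= k -> False.
Proof.
move=> H1; elim: k => [|k IH] p u v s0 mp dp uV pu pv uv ps ls sk;
  (case: s0 ps ls sk => [|t s] ps ls sk; first by move: uv; rewrite -ls eqxx); first by [].
move: ps => /= /andP [/and3P [_ tV fut] ps].
case: (boolP (p t == t)) => [/eqP pt|pt]; first exact: augment mp dp uV tV fut pu pt.
have tv : t != v by apply/eqP => tv; rewrite tv pv eqxx in pt.
have [q0 mq0 [dq0 q0t]] := H1 t tV.
pose P (q : {ffun T -> T}) := [&& matchb V q, defect V q == dmin V & q t == t].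
pose agr (q : {ffun T -> T}) := #|[set x | p x == q x]|.
have Pq0 : P q0 by rewrite /P mq0 dq0 q0t !eqxx.
case: (@arg_maxnP _ q0 P agr Pq0) => q /and3P [mq /eqP dq /eqP qt] qmax.
have qu : q u != u.
  by apply/eqP => qu; exact: augment mq dq uV tV fut qu qt.
have qv : q v != v.
  by apply/eqP => qv; apply: (IH q t v s mq dq tV qt qv tv ps ls).
pose r := rr p q.
have key x : x \in V -> p x = x -> q x != x -> connect r x t.
  move=> xV px qx; apply/negPn/negP => nct.
  pose O := [set y | connect r x y].
  have Oc y : y \in O -> (p y \in O) && (q y \in O).
    rewrite !inE => cy; apply/andP; split; apply: connect_trans cy _; apply: connect1; by rewrite /= eqxx ?orbT.
  have Ocn y : y \notin O -> (p y \notin O) && (q y \notin O).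
    move=> yO; apply/andP; split; apply/negP => h.
      by have := Oc _ h; rewrite (m_inv mp) (negbTE yO).
    by have := Oc _ h; rewrite (m_inv mq) (negbTE yO) andbF.
  pose q' := [ffun y => if y \in O then p y else q y].
  pose p' := [ffun y => if y \in O then q y else p y].
  have mq' : matchb V q'.
    apply/and3P; split; apply/forallP => y; rewrite !ffunE.
    - case: (boolP (y \in O)) => yO.
        by have /andP [-> _] := Oc y yO; rewrite (m_inv mp).
      by have /andP [_ h] := Ocn y yO; rewrite (negbTE h) (m_inv mq).
    - by apply/implyP => yV; case: ifP => _; rewrite ?(m_out mp) ?(m_out mq).
    - by apply/implyP; case: ifP => _; [exact: (@m_edge V p mp y) | exact: (@m_edge V q mq y)].
  have mp' : matchb V p'.
    apply/and3P; split; apply/forallP => y; rewrite !ffunE.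
    - case: (boolP (y \in O)) => yO.
        by have /andP [_ ->] := Oc y yO; rewrite (m_inv mq).
      by have /andP [h _] := Ocn y yO; rewrite (negbTE h) (m_inv mp).
    - by apply/implyP => yV; case: ifP => _; rewrite ?(m_out mp) ?(m_out mq).
    - by apply/implyP; case: ifP => _; [exact: (@m_edge V q mq y) | exact: (@m_edge V p mp y)].
  pose Dp := [set y in V | p y == y]; pose Dq := [set y in V | q y == y].
  have dsplit (g : {ffun T -> T}) : defect V g = #|[set y in V | g y == y] :&: O| + #|[set y in V | g y == y] :\: O|.
    by rewrite cardsID.
  have e1 : [set y in V | p' y == y] :&: O = Dq :&: O.
    by apply/setP => y; rewrite !inE ffunE !inE; case: (connect r x y); rewrite ?andbF ?andbT.
  have e2 : [set y in V | p' y == y] :\: O = Dp :\: O.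
    by apply/setP => y; rewrite !inE ffunE !inE; case: (connect r x y); rewrite ?andbF ?andbT.
  have e3 : [set y in V | q' y == y] :&: O = Dp :&: O.
    by apply/setP => y; rewrite !inE ffunE !inE; case: (connect r x y); rewrite ?andbF ?andbT.
  have e4 : [set y in V | q' y == y] :\: O = Dq :\: O.
    by apply/setP => y; rewrite !inE ffunE !inE; case: (connect r x y); rewrite ?andbF ?andbT.
  have l1 := dmin_le mp'; have l2 := dmin_le mq'.
  rewrite !dsplit e1 e2 in l1; rewrite !dsplit e3 e4 in l2.
  move: dp dq; rewrite !dsplit -/Dp -/Dq => dp dq.
  have dq' : defect V q' = dmin V.
    rewrite dsplit e3 e4; move: l1 l2 dp dq.
    move: #|Dp :&: O| #|Dp :\: O| #|Dq :&: O| #|Dq :\: O| (dmin V) => a b c d m; clear; lia.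
  have tO : t \notin O by rewrite inE.
  have q't : q' t = t by rewrite ffunE (negbTE tO).
  have Pq' : P q' by rewrite /P mq' dq' q't !eqxx.
  have := qmax q' Pq'; rewrite /agr; apply/negP; rewrite -ltnNge.
  apply: proper_card; apply/properP; split.
    by apply/subsetP => y; rewrite !inE ffunE; case: ifP => // _ /eqP ->.
  exists x; last by rewrite inE px eq_sym.
  by rewrite inE ffunE inE connect0.
have rsym : symmetric r.
  move=> a b; rewrite /r /= ; apply/orP/orP => [[/eqP ->|/eqP ->]|[/eqP ->|/eqP ->]];
    rewrite ?(m_inv mp) ?(m_inv mq) eqxx ?orbT; by [left|right].
have vV : v \in V by rewrite -ls; exact: path_V tV ps.
have cut := key u uV pu qu; have cvt := key v vV pv qv.
have cuv : connect r u v by rewrite (connect_trans cut) // (sym_connect_sym rsym) cvt.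
have [z hz] := orbit_fix (m_inv mp) (m_inv mq) pu qu.
case: (hz v cuv); first by rewrite pv eqxx.
  by move=> vu; rewrite vu eqxx in uv.
case: (hz t cut); first by rewrite qt eqxx orbT.
  by move=> tu; rewrite -tu qt eqxx in qu.
by move=> tz vz; rewrite tz -vz eqxx in tv.
Qed.


Lemma gallai (V : {set T}) :
  (forall v, v \in V -> exists2 p, matchb V p & (defect V p = dmin V) /\ p v = v) ->
  (forall u v, u \in V -> v \in V -> connect (Rr V) u v) -> dmin V <= 1.
Proof.
move=> H1 Hc; rewrite leqNgt; apply/negP => hd.
have [p mp dp] := dmin_attained V.
have : 1 < #|[set x in V | p x == x]| by rewrite -/(defect V p) dp.
case/card_gt1P => u [v [uD vD uv]].
move: uD vD; rewrite !inE => /andP [uV /eqP pu] /andP [vV /eqP pv].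
have /connectP [s ps ls] := Hc u v uV vV.
exact: (gal_ind H1 mp dp uV pu pv uv ps (esym ls) (leqnn (size s))).
Qed.

Lemma match_sub (V : {set T}) v p : matchb (V :\ v) p -> matchb V p.
Proof.
move=> mp; apply/and3P; split; apply/forallP => x.
- by rewrite (m_inv mp).
- by apply/implyP => xV; rewrite (m_out mp) // inE negb_and xV orbT.
- exact/implyP/(@m_edge _ _ mp x).
Qed.

Lemma alpha2_sub (V W : {set T}) : W \subset V -> alpha2 V -> alpha2 W.
Proof. by move=> sWV a2 x y z xW yW zW; apply: a2; apply: (subsetP sWV). Qed.

Lemma core (V : {set T}) : alpha2 V -> (forall v, v \in V -> chi0 (V :\ v) < chi0 V) ->
  (forall A : {set T}, A \subset V -> A != set0 -> A != V ->
     exists x y, [/\ x \in A, y \in V :\: A & ~~ e x y]) ->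
  2 * chi0 V <= #|V| + 1.
Proof.
move=> a2 crit cut.
have H1 v : v \in V -> exists2 p, matchb V p & (defect V p = dmin V) /\ p v = v.
  move=> vV; have a2' := alpha2_sub (subD1set V v) a2.
  have [p mp hp] := col_match a2' (chi0_col (V :\ v)).
  have pv : p v = v by rewrite (m_out mp) // !inE eqxx.
  have mpV := match_sub mp.
  exists p => //; split => //.
  have dV : defect V p = (defect (V :\ v) p).+1.
    rewrite /defect (cardsD1 v [set x in V | p x == x]) !inE vV pv eqxx add1n.
    by congr (_.+1); apply: eq_card => x; rewrite !inE andbA.
  have [q mq dq] := dmin_attained V.
  have hq := match_col mq.
  have cv := crit v vV.
  have nV : #|V| = (#|V :\ v|).+1 by rewrite (cardsD1 v V) vV.
  apply/eqP; rewrite eqn_leq dmin_le // andbT -dq.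
  move: hp hq cv; rewrite dV nV.
  move: (defect (V :\ v) p) (defect V q) (chi0 (V :\ v)) (chi0 V) #|V :\ v| => a b c d n.
  clear; lia.
have Hc u w : u \in V -> w \in V -> connect (Rr V) u w.
  move=> uV wV; pose A := [set y in V | connect (Rr V) u y].
  have sA : A \subset V by apply/subsetP => y; rewrite inE => /andP [].
  have uA : u \in A by rewrite inE uV connect0.
  case: (A =P V) => [AV|/eqP nAV]; first by move: wV; rewrite -{1}AV inE => /andP [].
  have nA : A != set0 by apply/set0Pn; exists u.
  have [x [y [xA yAV nexy]]] := cut A sA nA nAV.
  move: yAV; rewrite inE => /andP [yA yV]; move: (yA); rewrite inE yV /= => /negP; case.
  move: (xA); rewrite inE => /andP [xV cux]; apply: connect_trans cux (connect1 _).
  rewrite /= xV yV /Fr nexy andbT; apply/eqP => xy; by rewrite -xy xA in yA.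
have [p mp dp] := dmin_attained V.
have := match_col mp; rewrite dp => h; apply: leq_trans h _.
by rewrite leq_add2l; apply: gallai.
Qed.


Lemma clique2 x y : e x y -> is_clique e [set x; y].
Proof.
move=> exy; apply/forallP => a; apply/implyP => ha; apply/forallP => b; apply/implyP => hb.
apply/implyP => nab; move: ha hb nab; rewrite !inE => /orP [] /eqP -> /orP [] /eqP ->;
  rewrite ?eqxx // => _; by rewrite e_sym.
Qed.

Lemma cards_le1 (V : {set T}) x : x \in V -> 1 <= omV V.
Proof.
move=> xV; have -> : 1 = #|[set x]| by rewrite cards1.
apply: omV_ge; first by rewrite sub1set.
by apply/forallP => a; apply/implyP; rewrite inE => /eqP ->; apply/forallP => b; apply/implyP; rewrite inE => /eqP ->; rewrite eqxx.
Qed.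

Lemma claimA n (V : {set T}) : #|V| <= n -> 4 * chi0 V <= 2 * omV V + DeV V + 1 + #|V|.
Proof.
elim: n V => [|n IH] V hV.
  have -> : V = set0 by apply/eqP; rewrite -cards_eq0; lia.
  by rewrite /chi0 eqxx.
case: (V =P set0) => [->|/eqP nV]; first by rewrite /chi0 eqxx.
have [x0 x0V] : exists x0, x0 \in V by apply/set0Pn.
case: (classic (exists x y, [/\ x \in V, y \in V & e x y])) => [[ex [ey [exV eyV exy]]]|nb].
2:{ have c1 : chi0 V <= 1.
      apply: chi0_le; exists (fun _ => 0); split => // x y xV yV exy.
      by case: nb; exists x, y.
    have := cards_le1 x0V; have : 0 < #|V| by apply/card_gt0P; exists x0.
    lia. }
have om2 : 2 <= omV V.
  have nxy : ex != ey by apply/eqP => h; rewrite h e_irr in exy.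
  have -> : 2 = #|[set ex; ey]| by rewrite cards2 nxy.
  apply: omV_ge; [by rewrite subUset !sub1set exV eyV | exact: clique2].
case: (classic (exists v, v \in V /\ chi0 V <= chi0 (V :\ v))) => [[v [vV hv]]|nc].
  have hc := IH (V :\ v) _.
  have sW : V :\ v \subset V := subD1set V v.
  have c1 : #|V| = (#|V :\ v|).+1 by rewrite (cardsD1 v V) vV.
  have hn : #|V :\ v| <= n by move: c1 hV; move: #|V| #|V :\ v| => a b; clear; lia.
  have := hc hn; have := omV_sub sW; have := DeV_sub sW.
  move: hv c1; move: (chi0 V) (chi0 (V :\ v)) (omV V) (omV (V :\ v)) (DeV V) (DeV (V :\ v)) #|V| #|V :\ v|.
  clear; intros; lia.
case: (classic (exists x y z, [/\ x \in V, y \in V, z \in V & [/\ x != y, y != z, x != z &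
     [/\ ~~ e x y, ~~ e y z & ~~ e x z]]])) => [[x [y [z [xV yV zV [nxy nyz nxz [exy' eyz exz]]]]]]|nd].
  pose I := [set x; y; z].
  have iI : indepb I.
    apply/forallP => a; apply/implyP => ha; apply/forallP => b; apply/implyP => hb.
    move: ha hb; rewrite !inE => /orP [/orP [/eqP ->|/eqP ->]|/eqP ->] /orP [/orP [/eqP ->|/eqP ->]|/eqP ->];
      rewrite ?e_irr // e_sym //.
  have sIV : I \subset V by rewrite !subUset !sub1set xV yV zV.
  have [J [sIJ sJV iJ dom]] := mis_ext iI sIV.
  pose W := V :\: J.
  have nW : W != set0.
    apply/set0Pn; case: (boolP (ey \in J)) => eyJ.
      case: (boolP (ex \in J)) => exJ; first by have := indepP iJ exJ eyJ; rewrite exy.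
      by exists ex; rewrite inE exJ exV.
    by exists ey; rewrite inE eyJ eyV.
  have c3 : 3 <= #|J|.
    apply/card_gt2P; exists x, y, z; split; last by rewrite eq_sym in nxz.
    by split; apply: (subsetP sIJ); rewrite !inE eqxx ?orbT.
  have cV : #|J| + #|W| = #|V| by rewrite -(cardsID J V) (setIidPr sJV).
  have hn : #|W| <= n by move: cV c3 hV; move: #|J| #|W| #|V| => a b c; clear; lia.
  have hc := IH W hn.
  have h1 := chi_rm_indep V iJ.
  have h2 := DeV_rm sJV dom nW.
  have h3 := omV_sub (subsetDl V J).
  move: hc h1 h2 h3 cV c3; rewrite -/W.
  move: (chi0 V) (chi0 W) (omV V) (omV W) (DeV V) (DeV W) #|V| #|W| #|J|.
  clear; intros; lia.
case: (classic (exists A : {set T}, [/\ A \subset V, A != set0, A != V &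
     forall x y, x \in A -> y \in V :\: A -> e x y])) => [[A [sAV nA nAV join]]|nf].
  pose B := V :\: A.
  have nB : B != set0.
    have : ~~ (V \subset A) by apply: contra nAV => sVA; rewrite eqEsubset sAV sVA.
    by case/subsetPn => y yV yA; apply/set0Pn; exists y; rewrite inE yA yV.
  have cV : #|A| + #|B| = #|V| by rewrite -(cardsID A V) (setIidPr sAV).
  have cA : 0 < #|A| by rewrite card_gt0.
  have cB : 0 < #|B| by rewrite card_gt0.
  have hnA : #|A| <= n by move: cV cB hV; move: #|A| #|B| #|V| => a b c; clear; lia.
  have hnB : #|B| <= n by move: cV cA hV; move: #|A| #|B| #|V| => a b c; clear; lia.
  have hA := IH A hnA.
  have hB := IH B hnB.
  have h1 := chi_split V A; rewrite (setIidPr sAV) in h1.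
  have h2 := omV_join sAV join.
  have h3 := DeV_join sAV nA join.
  have h4 := DeV_bound nB.
  move: hA hB h1 h2 h3 h4 cV; rewrite -/B.
  move: (chi0 V) (chi0 A) (chi0 B) (omV V) (omV A) (omV B) (DeV V) (DeV A) (DeV B) #|V| #|A| #|B|.
  clear; intros; lia.
have a2 : alpha2 V.
  move=> x y z xV yV zV nxy nyz nxz exy' eyz exz; apply: nd.
  by exists x, y, z.
have crit v : v \in V -> chi0 (V :\ v) < chi0 V.
  by move=> vV; rewrite ltnNge; apply/negP => h; apply: nc; exists v.
have cut (A : {set T}) : A \subset V -> A != set0 -> A != V ->
     exists x y, [/\ x \in A, y \in V :\: A & ~~ e x y].
  move=> sAV nA nAV; case: (classic (exists x y, [/\ x \in A, y \in V :\: A & ~~ e x y])) => // hn.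
  case: nf; exists A; split => // x y xA yB; apply/negPn/negP => nexy; apply: hn.
  by exists x, y.
have hcore := core a2 crit cut.
have [x1 x1V dx1] := DeV_ex nV.
pose N := [set y in V | e x1 y].
pose Q := [set y in V | (y != x1) && ~~ e x1 y].
have cQ : is_clique e Q.
  apply/forallP => a; apply/implyP => ha; apply/forallP => b; apply/implyP => hb; apply/implyP => nab.
  move: ha hb; rewrite !inE => /and3P [aV ax1 ea] /and3P [bV bx1 eb].
  apply/negPn/negP => nab'; apply: (a2 x1 a b) => //; by rewrite eq_sym.
have hQ : #|Q| <= omV V by apply: omV_ge => //; apply/subsetP => y; rewrite inE => /andP [].
have leU (X Y : {set T}) : #|X :|: Y| <= #|X| + #|Y| by rewrite cardsU leq_subr.
have hVc : #|V| <= 1 + #|N| + #|Q|.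
  apply: leq_trans (_ : #|[set x1] :|: N :|: Q| <= _).
    apply: subset_leq_card; apply/subsetP => y yV; rewrite !inE yV /=.
    by case: (y =P x1) => //= _; case: (e x1 y).
  by apply: leq_trans (leU _ _) _; rewrite leq_add2r; apply: leq_trans (leU _ _) _; rewrite cards1.
rewrite -/N in dx1.
move: hcore hQ hVc om2 dx1; move: (chi0 V) (omV V) (DeV V) #|V| #|N| #|Q|.
clear; intros; lia.
Qed.



Lemma mainS n (G H : {set T}) : #|G| <= n -> H \subset G ->
  4 * chi0 G + #|H| <= 2 * omV G + DeV G + 1 + #|G| + 3 * chi0 H.
Proof.
elim: n G H => [|n IH] G H hG sHG.
  have G0 : G = set0 by apply/eqP; rewrite -cards_eq0; lia.
  have H0 : H = set0 by apply/eqP; rewrite -subset0 -G0.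
  by rewrite G0 H0 /chi0 eqxx cards0.
case: (H =P set0) => [->|/eqP nH].
  rewrite cards0 addn0 {2}/chi0 eqxx muln0 addn0; exact: claimA (leqnn _).
have [x0 x0H] : exists x0, x0 \in H by apply/set0Pn.
have x0G := subsetP sHG _ x0H.
have [f [fk fp]] := chi0_col H.
have [k kE] : exists k, chi0 H = k by exists (chi0 H).
rewrite kE in fk *.
have k1 : 1 <= k by apply: leq_ltn_trans (fk x0 x0H).
pose C := [set x in H | f x == f x0].
have iC : indepb C.
  apply/forallP => a; apply/implyP; rewrite inE => /andP [aH /eqP fa]; apply/forallP => b;
    apply/implyP; rewrite inE => /andP [bH /eqP fb]; apply/negP => eab.
  by apply: (fp a b aH bH eab); rewrite fa fb.
have sCG : C \subset G by apply/subsetP => x; rewrite inE => /andP [/(subsetP sHG)].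
have cHC : chi0 (H :\: C) <= k.-1.
  apply: chi0_le; exists (fun x => if f x0 < f x then (f x).-1 else f x); split.
    move=> x; rewrite !inE => /andP [/negP nC xH]; have := fk x xH.
    have : f x != f x0 by apply/negP => h; apply: nC; rewrite xH h.
    have := fk x0 x0H; move: (f x) (f x0) => a b; case: (ltnP b a) => h; lia.
  move=> x y; rewrite !inE => /andP [/negP nCx xH] /andP [/negP nCy yH] exy.
  have h := fp x y xH yH exy.
  have hx : f x != f x0 by apply/negP => h'; apply: nCx; rewrite xH h'.
  have hy : f y != f x0 by apply/negP => h'; apply: nCy; rewrite yH h'.
  move: h hx hy; move: (f x) (f y) (f x0) => a b c; case: (ltnP c a) => ha; case: (ltnP c b) => hb; lia.
have [J [sCJ sJG iJ dom]] := mis_ext iC sCG.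
pose G' := G :\: J; pose H' := H :\: J.
have x0J : x0 \in J by apply: (subsetP sCJ); rewrite inE x0H eqxx.
have sH'HC : H' \subset H :\: C by apply: setDS.
have cH' : chi0 H' <= k.-1 := leq_trans (chi0_sub sH'HC) cHC.
have h1 := chi_rm_indep G iJ.
have cG : #|J| + #|G'| = #|G| by rewrite -(cardsID J G) (setIidPr sJG).
have cH : #|H :&: J| + #|H'| = #|H| by rewrite cardsID.
have cHJ : #|H :&: J| <= #|J| by apply: subset_leq_card; apply: subsetIr.
have cHG : #|H| <= #|G| by apply: subset_leq_card.
have om1 := cards_le1 x0G.
case: (G' =P set0) => [G'0|/eqP nG'].
  have c0 : chi0 set0 = 0 by rewrite /chi0 eqxx.
  rewrite -/G' G'0 c0 in h1.
  move: h1 om1 cHG k1; move: (chi0 G) (omV G) (DeV G) #|G| #|H|; clear; intros; lia.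
have cJ : 1 <= #|J| by apply/card_gt0P; exists x0.
have sH'G' : H' \subset G' by apply: setSD.
have hn : #|G'| <= n by move: cG cJ hG; move: #|J| #|G'| #|G| => a b c; clear; lia.
have hc := IH G' H' hn sH'G'.
have h2 := DeV_rm sJG dom nG'.
have h3 := omV_sub (subsetDl G J).
move: hc h1 h2 h3 cG cH cHJ cH' k1; rewrite -/G'.
move: (chi0 G) (chi0 G') (omV G) (omV G') (DeV G) (DeV G') #|G| #|G'| #|J| #|H| #|H'| #|H :&: J| (chi0 H').
clear; intros; lia.
Qed.

End G.

From mathcomp Require Import ring lra.
Unset Implicit Arguments.
Import GRing.Theory Num.Theory.
Local Open Scope ring_scope.

Theorem proposition3 (T : finType) (e : rel T)
  (e_sym : symmetric e) (e_irr : irreflexive e)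
  (S : {set T}) (S_ne : S != set0) :
  ((chi e [set: T])%:R : rat) <=
    (1 / 2) * ((omega e)%:R + ((Delta e)%:R + 1 + (#|T|)%:R) / 2)
    + (3 * (chi e S)%:R - (#|S|)%:R) / 4.
Proof.
have h := mainS e_sym e_irr (leqnn #|[set: T]|) (subsetT S).
have nT : [set: T] != set0.
  by case/set0Pn: S_ne => x _; apply/set0Pn; exists x; rewrite inE.
have c1 : chi0 e [set: T] = chi e [set: T] by rewrite /chi0 (negbTE nT).
have c2 : chi0 e S = chi e S by rewrite /chi0 (negbTE S_ne).
have o1 : omV e [set: T] = omega e by apply: eq_bigl => A; rewrite subsetT.
have d1 : DeV e [set: T] = Delta e.
  rewrite /DeV /Delta; apply: eq_big => [x|x _]; first by rewrite inE.
  by apply: eq_card => y; rewrite !inE.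
rewrite c1 c2 o1 d1 cardsT in h.
have hr : ((4 * chi e [set: T] + #|S|)%N%:R : rat) <=
          ((2 * omega e + Delta e + 1 + #|T| + 3 * chi e S)%N%:R : rat) by rewrite ler_nat.
rewrite ?natrD ?natrM in hr.
move: hr; move: (chi e [set: T])%:R (chi e S)%:R (omega e)%:R (Delta e)%:R (#|T|)%:R (#|S|)%:R => a b c d t s.
move=> hr; lra.
Qed.
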